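(* Let $X\subseteq\mathbb{R}^n$ be a nonempty closed convex set with $0\in X$, $\|\cdot\|$ the Euclidean norm, $D(x\|x')=\tfrac12\|x-x'\|^2$, and suppose $\max_{x,x'\in X}D(x\|x')\le F^2$. Let $\tau\in\mathbb{N}$, $T\in\mathbb{N}$, and let $f_1,\dots,f_{T+\tau}:\mathbb{R}^n\to\mathbb{R}$ be convex differentiable functions with $\|\nabla f_t(x)\|\le L$ for all $x\in X$ and all $t$. Let $x^*\in X$ be a minimizer over $X$ of $f^*(x)=\frac1T\sum_{t=1}^Tf_t(x)$, and suppose each $f_t$ is strongly convex with parameter $\lambda>0$ in the sense that $f_t(x^* )\ge f_t(x)+\langle x^*-x,\nabla f_t(x)\rangle+\frac{\lambda}{2}\|x-x^*\|^2$ for all $x\in X$. Run delayed stochastic gradient descent: $x_1=\dots=x_{\tau+1}=0$, $g_t=\nabla f_t(x_t)$, and for $t=\tau+1,\dots,T+\tau$, $x_{t+1}=\operatorname{argmin}_{x\in X}\|x-(x_t-\eta_tg_{t-\tau})\|$, with learning rate $\eta_t=\frac{1}{\lambda(t-\tau)}$ for $t>\tau$ and $\eta_t=0$ for $t\le\tau$. Then the regret $R[X]=\sum_{t=1}^T\big(f_t(x_t)-f_t(x^* )\big)$ satisfies $$R[X]\le \lambda\tau F^2+\Big[\tfrac12+\tau\Big]\frac{L^2}{\lambda}\big(1+\tau+\log T\big).$$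
   Context: $\log$ denotes the natural logarithm. *)

(* Defs.v *)
From HB Require Import structures.
From mathcomp Require Import all_boot all_order all_algebra.
From mathcomp Require Import all_classical all_reals all_analysis.
Set Implicit Arguments. Unset Strict Implicit. Unset Printing Implicit Defensive.
Import Order.TTheory GRing.Theory Num.Theory.
Import numFieldNormedType.Exports.
Local Open Scope ring_scope.
Local Open Scope classical_set_scope.

Definition dotv (R : realType) (n : nat) (u v : 'rV[R]_n) : R :=
  \sum_(i < n) u ord0 i * v ord0 i.

Definition enorm (R : realType) (n : nat) (u : 'rV[R]_n) : R :=
  Num.sqrt (dotv u u).

Definition Dsq (R : realType) (n : nat) (x x' : 'rV[R]_n) : R :=
  2^-1 * enorm (x - x') ^+ 2.

Definition convex_setv (R : realType) (n : nat) (X : set 'rV[R]_n) : Prop :=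
  forall x y, X x -> X y -> forall a : R, 0 <= a <= 1 ->
    X (a *: x + (1 - a) *: y).

Definition convex_funv (R : realType) (n : nat) (f : 'rV[R]_n -> R) : Prop :=
  forall x y (a : R), 0 <= a <= 1 ->
    f (a *: x + (1 - a) *: y) <= a * f x + (1 - a) * f y.

Definition is_gradient (R : realType) (n : nat) (f : 'rV[R]_n -> R)
  (x g : 'rV[R]_n) : Prop :=
  differentiable f x /\ forall v, 'd f x v = dotv g v.

(* Main.v *)
Require Import Defs.
From HB Require Import structures.
From mathcomp Require Import all_boot all_order all_algebra.
From mathcomp Require Import all_classical all_reals all_analysis.
From mathcomp Require Import ring lra zify.
Import Order.TTheory GRing.Theory Num.Theory.
Import numFieldNormedType.Exports.
Local Open Scope ring_scope.
Local Open Scope classical_set_scope.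

Lemma eq_lex (R : numDomainType) (a b : R) : a = b -> a <= b.
Proof. by move=> ->. Qed.

Section Aux.
Context {R : realType} {n : nat}.
Implicit Types (u v w : 'rV[R]_n).

Lemma dotvC u v : dotv u v = dotv v u.
Proof. by rewrite /dotv; apply: eq_bigr => i _; rewrite mulrC. Qed.

Lemma dotvDl u v w : dotv (u + v) w = dotv u w + dotv v w.
Proof. by rewrite /dotv -big_split; apply: eq_bigr => i _; rewrite !mxE mulrDl. Qed.

Lemma dotvZl a u v : dotv (a *: u) v = a * dotv u v.
Proof. by rewrite /dotv mulr_sumr; apply: eq_bigr => i _; rewrite !mxE mulrA. Qed.

Lemma dotvNl u v : dotv (- u) v = - dotv u v.
Proof. by rewrite -scaleN1r dotvZl mulN1r. Qed.

Lemma dotvDr u v w : dotv w (u + v) = dotv w u + dotv w v.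
Proof. by rewrite dotvC dotvDl !(dotvC w). Qed.

Lemma dotvZr a u v : dotv v (a *: u) = a * dotv v u.
Proof. by rewrite dotvC dotvZl dotvC. Qed.

Lemma dotvNr u v : dotv v (- u) = - dotv v u.
Proof. by rewrite dotvC dotvNl dotvC. Qed.

Lemma dotv_ge0 u : 0 <= dotv u u.
Proof. by rewrite /dotv; apply: sumr_ge0 => i _; rewrite -expr2 sqr_ge0. Qed.

Lemma enorm_ge0 u : 0 <= enorm u.
Proof. exact: sqrtr_ge0. Qed.

Lemma enorm_sq u : enorm u ^+ 2 = dotv u u.
Proof. by rewrite /enorm sqr_sqrtr // dotv_ge0. Qed.

Lemma dotv_sqD u v : dotv (u + v) (u + v) = dotv u u + 2 * dotv u v + dotv v v.
Proof. rewrite dotvDl !dotvDr (dotvC v u); ring. Qed.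

Lemma dotv_sqB u v : dotv (u - v) (u - v) = dotv u u - 2 * dotv u v + dotv v v.
Proof. rewrite dotv_sqD dotvNr dotvNl dotvNr opprK; ring. Qed.

Lemma dotv_CS u v : dotv u v ^+ 2 <= dotv u u * dotv v v.
Proof.
set A := dotv u u; set B := dotv u v; set C := dotv v v.
have H t : 0 <= A + 2 * t * B + t ^+ 2 * C.
  have := dotv_ge0 (u + t *: v).
  by rewrite dotv_sqD dotvZr dotvZl dotvZr -/A -/B -/C; congr (_ <= _); ring.
have C0 : 0 <= C by exact: dotv_ge0.
have A0 : 0 <= A by exact: dotv_ge0.
case: (ltrP 0 C) => [Cp|Cn].
  have := H (- B / C).
  have -> : A + 2 * (- B / C) * B + (- B / C) ^+ 2 * C = A - B ^+ 2 / C.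
    by field; rewrite gt_eqF.
  rewrite subr_ge0 ler_pdivrMr //.
have C00 : C = 0 by apply/eqP; rewrite eq_le Cn C0.
rewrite C00 mulr0.
case: (eqVneq B 0) => [->|Bn]; first by rewrite expr0n.
have := H (- (A + 1) / (2 * B)).
rewrite C00 mulr0 addr0.
have -> : A + 2 * (- (A + 1) / (2 * B)) * B = -1.
  by field; rewrite Bn.
by move=> h; exfalso; lra.
Qed.

Lemma enorm_CS u v : dotv u v <= enorm u * enorm v.
Proof.
case: (lerP (dotv u v) 0) => [H|H].
  by apply: le_trans H _; rewrite mulr_ge0 // enorm_ge0.
rewrite -(ler_pXn2r (n:=2)) //; last by rewrite nnegrE mulr_ge0 // enorm_ge0.
  by rewrite exprMn !enorm_sq dotv_CS.
by rewrite nnegrE ltW.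
Qed.


Lemma sq_le {a b : R} : 0 <= a -> a <= b -> a ^+ 2 <= b ^+ 2.
Proof. move=> a0 ab; rewrite !expr2; apply: ler_pM => //. Qed.

Lemma proj_le (X : set 'rV[R]_n) p z y : convex_setv X -> X p -> X y ->
  (forall w, X w -> enorm (p - z) <= enorm (w - z)) ->
  dotv (p - y) (p - y) <= dotv (z - y) (z - y).
Proof.
move=> cX Xp Xy Hmin.
set c := dotv (p - z) (y - p); set d := dotv (y - p) (y - p).
set A := dotv (p - z) (p - z).
have d0 : 0 <= d by exact: dotv_ge0.
have Ha a : 0 < a <= 1 -> 0 <= 2 * c + a * d.
  case/andP=> a0 a1.
  have Xw := cX _ _ Xy Xp a (ltac:(by rewrite (ltW a0) a1)).
  have := sq_le (enorm_ge0 _) (Hmin _ Xw).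
  have -> : a *: y + (1 - a) *: p - z = (p - z) + a *: (y - p).
    by apply/rowP => i; rewrite !mxE; ring.
  rewrite !enorm_sq (dotv_sqD (p - z)); rewrite !(dotvZr, dotvZl) -/c -/d -/A => h.
  have h2 : 0 <= a * (2 * c + a * d) by lra.
  by rewrite pmulr_rge0 in h2.
have c0 : 0 <= c.
  rewrite leNgt; apply/negP => cn.
  case: (ltrP 0 d) => dp.
    set a := Num.min 1 (- c / d).
    have a0 : 0 < a by rewrite lt_min ltr01 /= divr_gt0 // oppr_gt0.
    have a1 : a <= 1 by rewrite ge_min lexx.
    have ad : a * d <= - c by rewrite -ler_pdivlMr // ge_min lexx orbT.
    have := Ha a (ltac:(by rewrite a0 a1)); lra.
  have d00 : d = 0 by apply/eqP; rewrite eq_le dp d0.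
  have := Ha 1 (ltac:(by rewrite ltr01 lexx)); rewrite d00; lra.
have -> : z - y = (z - p) + (p - y) by apply/rowP => i; rewrite !mxE; ring.
rewrite (dotv_sqD (z - p)).
have -> : dotv (z - p) (p - y) = c.
  rewrite /c -[z - p]opprB -[p - y]opprB dotvNl dotvNr opprK //.
have := dotv_ge0 (z - p); lra.
Qed.

Lemma enormZ (a : R) u : enorm (a *: u) = `|a| * enorm u.
Proof. by rewrite /enorm dotvZl dotvZr mulrA -expr2 sqrtrM ?sqr_ge0 // sqrtr_sqr. Qed.


Lemma step1 (X : set 'rV[R]_n) p z xt g xs eta : convex_setv X -> X p -> X xs ->
  (forall w, X w -> enorm (p - z) <= enorm (w - z)) -> z = xt - eta *: g ->
  dotv (p - xs) (p - xs) <=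
    dotv (xt - xs) (xt - xs) - 2 * eta * dotv (xt - xs) g + eta ^+ 2 * dotv g g.
Proof.
move=> cX Xp Xs Hm ez. have PL := proj_le X p z xs cX Xp Xs Hm. apply: le_trans PL _.
have -> : z - xs = (xt - xs) - eta *: g by rewrite ez; apply/rowP => i; rewrite !mxE; ring.
rewrite dotv_sqB !(dotvZl, dotvZr); by apply: eq_lex; ring.
Qed.

Lemma step2 (X : set 'rV[R]_n) p z xt g eta : convex_setv X -> X p -> X xt ->
  (forall w, X w -> enorm (p - z) <= enorm (w - z)) -> z = xt - eta *: g ->
  dotv (xt - p) (xt - p) <= eta ^+ 2 * dotv g g.
Proof.
move=> cX Xp Xs Hm ez.
have := step1 X p z xt g xt eta cX Xp Xs Hm ez; rewrite subrr.
have -> : dotv (0 : 'rV[R]_n) 0 = 0 by rewrite /dotv big1 // => i _; rewrite mxE mul0r.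
have -> : dotv (0 : 'rV[R]_n) g = 0 by rewrite /dotv big1 // => i _; rewrite mxE mul0r.
rewrite -[xt - p]opprB dotvNl dotvNr opprK mulr0 subr0 add0r //.
Qed.

Lemma enorm0 : enorm (0 : 'rV[R]_n) = 0.
Proof. by rewrite /enorm /dotv big1 ?sqrtr0 // => i _; rewrite mxE mul0r. Qed.

End Aux.

Lemma sqrt_le_of {R : realType} (u b : R) : 0 <= u -> 0 <= b -> u ^+ 2 <= b ^+ 2 -> u <= b.
Proof. by move=> u0 b0; rewrite (ler_pXn2r (n:=2)). Qed.

Lemma realB {R : realType} (D D' G q L2 lam s e : R) : 0 < lam -> 0 < s ->
  e = (lam * s)^-1 ->
  D' <= D - 2 * e * G + e ^+ 2 * q -> q <= L2 ->
  G <= lam * s / 2 * (D - D') + L2 / lam / 2 * s^-1.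
Proof.
move=> l0 s0 ee H qL.
have e0 : 0 < e by rewrite ee invr_gt0 mulr_gt0.
have H1 : e ^+ 2 * q <= e ^+ 2 * L2 by rewrite ler_wpM2l // exprn_ge0 // ltW.
have H2 : 2 * e * G <= D - D' + e ^+ 2 * L2.
  by move: H H1; generalize (2 * e * G) (e ^+ 2 * q) (e ^+ 2 * L2) => a b c; lra.
have -> : G = lam * s / 2 * (2 * e * G).
  by rewrite ee; field; rewrite !gt_eqF.
apply: le_trans (ler_wpM2l _ H2) _; first by rewrite divr_ge0 // mulr_ge0 // ltW.
apply: eq_lex; rewrite ee; by field; rewrite !gt_eqF.
Qed.

Section Seq.
Variable R : realType.

Definition Hs (m : nat) : R := \sum_(k < m) (k.+1%:R)^-1.

Lemma HsS m : Hs m.+1 = Hs m + (m.+1%:R)^-1.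
Proof. by rewrite /Hs big_ord_recr. Qed.

Lemma Hs_mono m m' : (m <= m')%N -> Hs m <= Hs m'.
Proof.
move=> /subnK <-; elim: (m' - m)%N => [|k IH]; first by rewrite add0n.
by rewrite addSn HsS; apply: le_trans IH _; rewrite lerDl invr_ge0.
Qed.

Lemma Hs_ln m : (0 < m)%N -> Hs m <= 1 + ln m%:R.
Proof.
elim: m => [//|m IH] _.
case: m IH => [|m] IH; first by rewrite /Hs big_ord1 ln1 addr0 invr1.
rewrite HsS; have {}IH := IH isT.
have key : ln (m.+1%:R : R) - ln (m.+2%:R) <= - (m.+2%:R)^-1.
  rewrite -ln_div ?posrE ?ltr0n //.
  have -> : (m.+1%:R : R) / m.+2%:R = 1 + - (m.+2%:R)^-1.
    have e : (m.+2%:R : R) = m.+1%:R + 1 by rewrite -addn1 natrD.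
    by rewrite e; field; rewrite gt_eqF // addr_gt0 ?ltr0Sn.
  apply: le_ln1Dx; rewrite ltrN2 invf_lt1 ?ltr0n // ltr1n //.
apply: le_trans (lerD IH (lexx _)) _.
rewrite -addrA lerD2l -lerBrDr.
by move: key; rewrite lerBlDr addrC.
Qed.

Definition ee (tau j : nat) : R := if (j <= tau)%N then 0 else ((j - tau)%:R)^-1.

Lemma ee_ge0 tau j : 0 <= ee tau j.
Proof. by rewrite /ee; case: ifP => // _; rewrite invr_ge0. Qed.

Lemma sum_ee tau k N : (k <= tau)%N ->
  \sum_(s < N) ee tau (s + k) = Hs (N + k - tau - 1).
Proof.
move=> ktau; elim: N => [|N IH].
  by rewrite big_ord0 add0n (_ : (k - tau - 1 = 0)%N) ?/Hs ?big_ord0 //; lia.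
rewrite big_ord_recr /= IH /ee.
case: ifP => h.
  by rewrite addr0 (_ : (N + k - tau - 1 = N.+1 + k - tau - 1)%N) //; lia.
rewrite (_ : (N.+1 + k - tau - 1 = (N + k - tau - 1).+1)%N); last by move/negbT: h; lia.
rewrite HsS; congr (_ + (_ %:R)^-1); move/negbT: h; lia.
Qed.

Lemma tele (c : nat -> R) m : \sum_(i < m) (c i.+1 - c i) = c m - c 0%N.
Proof.
elim: m => [|m IH]; first by rewrite big_ord0 subrr.
by rewrite big_ord_recr /= IH; ring.
Qed.

Lemma shift_id (b : nat -> R) tau N :
  \sum_(s < N) (b (s + tau)%N - b s) = \sum_(i < tau) (b (N + i)%N - b i).
Proof.
elim: N => [|N IH].
  by rewrite big_ord0; symmetry; apply: big1 => i _; rewrite add0n subrr.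
rewrite big_ord_recr /= IH.
have := tele (fun i => b (N + i)%N) tau; rewrite addn0 => <-.
rewrite -big_split /=; apply: eq_bigr => i _; rewrite addSn addnS; ring.
Qed.

Lemma abel (a : nat -> R) N :
  \sum_(s < N) (s.+1%:R * (a s - a s.+1)) = \sum_(s < N) a s - N%:R * a N.
Proof.
elim: N => [|N IH]; first by rewrite !big_ord0 mul0r subr0.
rewrite !big_ord_recr /= IH -[N.+1]addn1 natrD; ring.
Qed.

End Seq.

Lemma sum_cst {R : realType} m (c : R) : \sum_(i < m) c = m%:R * c.
Proof. by rewrite big_const_ord iter_addr_0 mulr_natl. Qed.

Lemma dotv0l {R : realType} {n : nat} (g : 'rV[R]_n) : dotv 0 g = 0.
Proof. by rewrite /dotv big1 // => i _; rewrite mxE mul0r. Qed.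

Theorem theorem4 (R : realType) (n : nat) (X : set 'rV[R]_n) (F L lambda : R)
  (tau T : nat)
  (f : nat -> 'rV[R]_n -> R) (grad : nat -> 'rV[R]_n -> 'rV[R]_n)
  (xstar : 'rV[R]_n) (x : nat -> 'rV[R]_n) :
  closed X -> convex_setv X -> X 0 ->
  (forall y y', X y -> X y' -> Dsq y y' <= F ^+ 2) ->
  (0 < T)%N ->
  (forall t, (1 <= t <= T + tau)%N -> convex_funv (f t)) ->
  (forall t, (1 <= t <= T + tau)%N -> forall y, is_gradient (f t) y (grad t y)) ->
  (forall t, (1 <= t <= T + tau)%N -> forall y, X y -> enorm (grad t y) <= L) ->
  X xstar ->
  (forall y, X y ->
     T%:R^-1 * \sum_(1 <= t < T.+1) f t xstar
       <= T%:R^-1 * \sum_(1 <= t < T.+1) f t y) ->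
  0 < lambda ->
  (forall t, (1 <= t <= T + tau)%N -> forall y, X y ->
     f t xstar >= f t y + dotv (xstar - y) (grad t y)
                  + lambda / 2 * enorm (y - xstar) ^+ 2) ->
  (forall t, (1 <= t <= tau.+1)%N -> x t = 0) ->
  (forall t, (tau.+1 <= t <= T + tau)%N ->
     let eta := (lambda * (t - tau)%:R)^-1 in
     let z := x t - eta *: grad (t - tau)%N (x (t - tau)%N) in
     X (x t.+1) /\ forall y, X y -> enorm (x t.+1 - z) <= enorm (y - z)) ->
  \sum_(1 <= t < T.+1) (f t (x t) - f t xstar)
    <= lambda * tau%:R * F ^+ 2
       + (2^-1 + tau%:R) * (L ^+ 2 / lambda) * (1 + tau%:R + ln T%:R).
Proof.
move=> clX cX X0 HF T0 Hconv Hgrad HL Xs Hmin lam0 Hsc Hinit Hupd.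
have Xx : forall t, (1 <= t <= T + tau + 1)%N -> X (x t).
  elim=> [//|t IH] /andP[_ ht].
  case: (leqP t.+1 tau.+1) => h; first by rewrite Hinit // h.
  by have [] := Hupd t ltac:(lia).
have L0 : 0 <= L := le_trans (enorm_ge0 _) (HL 1%N ltac:(lia) (x 1%N) (Xx 1%N ltac:(lia))).
pose D j := dotv (x j - xstar) (x j - xstar).
pose k := L ^+ 2 / lambda.
have DB : forall j, (1 <= j <= T + tau)%N -> D j <= 2 * F ^+ 2.
  move=> j hj; have := HF _ _ (Xx j ltac:(lia)) Xs.
  rewrite /Dsq enorm_sq -/(D j) => h; lra.
have D0 : forall j, 0 <= D j by move=> j; exact: dotv_ge0.
have Bj : forall j, (1 <= j <= T + tau)%N -> enorm (x j - x j.+1) <= L / lambda * ee R tau j.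
  move=> j hj; case: (leqP j tau) => h.
    rewrite !Hinit ?subrr ?enorm0 /ee ?h ?mulr0 //; lia.
  have [Xn Hp] := Hupd j ltac:(lia).
  have := @step2 R n X (x j.+1) _ (x j) _ _ cX Xn (Xx j ltac:(lia)) Hp erefl.
  set g := grad _ _; set eta := (lambda * _)^-1 => Hq.
  have gL : enorm g <= L by apply: HL; [lia | apply: Xx; lia].
  have eta0 : 0 <= eta by rewrite invr_ge0 mulr_ge0 // ltW.
  have -> : L / lambda * ee R tau j = eta * L.
    rewrite /ee leqNgt h /= /eta invfM; ring.
  apply: sqrt_le_of; [exact: enorm_ge0 | exact: mulr_ge0 |].
  rewrite enorm_sq exprMn; apply: le_trans Hq _; rewrite ler_wpM2l ?exprn_ge0 //.
  by rewrite -enorm_sq; apply: sq_le => //; exact: enorm_ge0.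
pose a s := D (s.+1 + tau)%N.
have term : forall s, (s < T)%N ->
  f s.+1 (x s.+1) - f s.+1 xstar <= lambda / 2 * (s.+1%:R * (a s - a s.+1) - D s.+1)
     + k / 2 * (s.+1%:R)^-1 + k * \sum_(i < tau) ee R tau (s + i.+1).
  move=> s sT.
  have Xs1 : X (x s.+1) by apply: Xx; lia.
  set g := grad s.+1 (x s.+1).
  have gL : enorm g <= L by apply: HL => //; lia.
  have Qg : dotv g g <= L ^+ 2 by rewrite -enorm_sq; apply: sq_le => //; exact: enorm_ge0.
  have HA := Hsc s.+1 ltac:(lia) _ Xs1.
  rewrite -[xstar - x s.+1]opprB dotvNl enorm_sq -/(D s.+1) -/g in HA.
  have [Xn Hp] := Hupd (s.+1 + tau)%N ltac:(lia).
  rewrite addnK in Hp.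
  have H1 := @step1 R n X _ _ (x (s.+1 + tau)%N) g _ _ cX Xn Xs Hp erefl.
  have HB := @realB R _ _ _ _ _ _ s.+1%:R _ lam0 ltac:(by rewrite ltr0Sn) erefl H1 Qg.
  have HC : forall m, (m <= tau)%N ->
      dotv (x s.+1 - x (s.+1 + m)%N) g <= k * \sum_(i < m) ee R tau (s + i.+1).
    elim=> [|m IH] hm.
      by rewrite addn0 subrr dotv0l big_ord0 mulr0.
    have -> : x s.+1 - x (s.+1 + m.+1)%N =
        (x s.+1 - x (s.+1 + m)%N) + (x (s.+1 + m)%N - x (s.+1 + m)%N.+1).
      by rewrite addnS; apply/rowP => i; rewrite !mxE; ring.
    rewrite dotvDl big_ord_recr /= mulrDr.
    apply: lerD; first by apply: IH; lia.
    apply: le_trans (enorm_CS _ _) _.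
    apply: le_trans (ler_pM (enorm_ge0 _) (enorm_ge0 _) (Bj (s.+1 + m)%N ltac:(lia)) gL) _.
    by apply: eq_lex; rewrite addSnnS /k; ring.
  have HC' := HC tau (leqnn _).
  have HG : dotv (x s.+1 - xstar) g = dotv (x (s.+1 + tau)%N - xstar) g
      + dotv (x s.+1 - x (s.+1 + tau)%N) g.
    by rewrite -dotvDl; congr dotv; apply/rowP => i; rewrite !mxE; ring.
  rewrite -/(D (s.+1 + tau)%N) -/(D (s.+1 + tau).+1) in HB.
  have E : lambda / 2 * (s.+1%:R * (a s - a s.+1) - D s.+1) + k / 2 * (s.+1%:R)^-1
       + k * \sum_(i < tau) ee R tau (s + i.+1) =
     (lambda * s.+1%:R / 2 * (D (s.+1 + tau)%N - D (s.+1 + tau).+1)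
        + L ^+ 2 / lambda / 2 * (s.+1%:R)^-1)
     + k * \sum_(i < tau) ee R tau (s + i.+1) - lambda / 2 * D s.+1.
    by rewrite /a /k addSn; ring.
  rewrite E; move: HA HB HC'; rewrite HG => HA HB HC'.
  apply: le_trans (_ : _ <= dotv (x (s.+1 + tau)%N - xstar) g + dotv (x s.+1 - x (s.+1 + tau)%N) g - lambda / 2 * D s.+1) _; first by move: HA; generalize (lambda / 2 * D s.+1) => c; lra.
  exact: lerD (lerD HB HC') (lexx _).
rewrite big_add1 /= big_mkord.
apply: le_trans (_ : _ <= \sum_(s < T) (lambda / 2 * (s.+1%:R * (a s - a s.+1) - D s.+1)
     + k / 2 * (s.+1%:R)^-1 + k * \sum_(i < tau) ee R tau (s + i.+1))) _.
  by apply: ler_sum => s _; exact: term.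
rewrite !big_split /= -!mulr_sumr.
have P1 : \sum_(s < T) (s.+1%:R * (a s - a s.+1) - D s.+1) <= tau%:R * (2 * F ^+ 2).
  rewrite sumrB abel.
  have SH : \sum_(s < T) a s - \sum_(s < T) D s.+1 = \sum_(i < tau) (D (T + i).+1 - D i.+1).
    rewrite -sumrB -(shift_id _ (fun j => D j.+1)); apply: eq_bigr => i _; by rewrite /a addSn.
  have aT : 0 <= T%:R * a T := mulr_ge0 (ler0n _ _) (D0 _).
  have : \sum_(i < tau) (D (T + i).+1 - D i.+1) <= tau%:R * (2 * F ^+ 2).
    apply: le_trans (_ : _ <= \sum_(i < tau) (2 * F ^+ 2)) _; last first.
      by rewrite sum_cst.
    apply: ler_sum => i _.
    have := DB (T + i).+1 ltac:(by have := ltn_ord i; lia); have := D0 i.+1; lra.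
  lra.
have P2 : \sum_(s < T) (s.+1%:R)^-1 <= 1 + ln (T%:R : R) by have := Hs_ln R T T0; rewrite /Hs.
have P3 : \sum_(s < T) \sum_(i < tau) ee R tau (s + i.+1) <= tau%:R * (1 + ln (T%:R : R)).
  rewrite exchange_big /=.
  apply: le_trans (_ : _ <= \sum_(i < tau) (1 + ln (T%:R : R))) _; last first.
    by rewrite sum_cst.
  apply: ler_sum => i _.
  rewrite sum_ee; last exact: ltn_ord.
  apply: le_trans (Hs_ln R T T0); apply: Hs_mono; have := ltn_ord i; lia.
have k0 : 0 <= k by rewrite /k divr_ge0 ?sqr_ge0 // ltW.
have lnT : 0 <= ln (T%:R : R) by apply: ln_ge0; rewrite ler1n.
apply: le_trans (lerD (lerD (ler_wpM2l _ P1) (ler_wpM2l _ P2)) (ler_wpM2l k0 P3)) _.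
- by rewrite divr_ge0 // ltW.
- by rewrite divr_ge0.
rewrite -subr_ge0.
have -> : lambda * tau%:R * F ^+ 2 + (2^-1 + tau%:R) * (L ^+ 2 / lambda) * (1 + tau%:R + ln T%:R)
   - (lambda / 2 * (tau%:R * (2 * F ^+ 2)) + k / 2 * (1 + ln T%:R) + k * (tau%:R * (1 + ln T%:R)))
   = (2^-1 + tau%:R) * k * tau%:R by rewrite /k; field; rewrite gt_eqF.
apply: mulr_ge0 => //; apply: mulr_ge0 => //; apply: addr_ge0 => //; by rewrite invr_ge0.
Qed.
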